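(* Let $L:G\to\mathcal{L}$ be a friendly labeling function, $T$ a tree with root edge, and $e$ an interior edge of $T$. Let $\lambda^-\in{\rm im}(L^{T_{e,-}})$ and $\lambda^+\in{\rm im}(L^{T_{e,+}})$ with $\lambda^-(e)=\lambda^+(e)$. Then the labeling $\lambda:E(T)\to\mathcal{L}$ which agrees with $\lambda^-$ on the edges of $T_{e,-}$ and with $\lambda^+$ on the edges of $T_{e,+}$ is consistent, i.e. $\lambda\in{\rm im}(L^T)$.
   Context: Let $G$ be a finite abelian group written additively, $\mathcal{L}$ a finite set, $L:G\to\mathcal{L}$ a function. A tree with root edge is a finite tree $T$ with a distinguished leaf $\rho$; the edge at $\rho$ is the root edge. Every vertex $v\neq\rho$ has a unique parent edge (first edge on the path from $v$ to $\rho$); other edges at $v$ are child edges. Vertices that are neither $\rho$ nor leaves are interior vertices; an edge is interior if both endpoints are interior vertices. $E(T)$ is the edge set. An edge $e'$ is below $e$ if $e$ lies on the path from $\rho$ to $e'$ (so $e$ is below itself). A map $h:E(T)\to G$ is a consistent assignment if for every interior vertex $v$, $h(\text{parent edge of }v)=\sum h(\text{child edges of }v)$. ${\rm im}(L^T)=\{L\circ h: h\text{ consistent}\}\subseteq\mathcal{L}^{E(T)}$ is the set of consistent labelings. For an edge $e$, $T_{e,-}$ is the tree formed by all edges below $e$, regarded as a tree with root edge $e$ (distinguished leaf = endpoint of $e$ closer to $\rho$); $T_{e,+}$ is the tree formed by $e$ and all edges not below $e$, with the same $\rho$ (the endpoint of $e$ farther from $\rho$ becomes a leaf). Friendliness: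 for $m\ge3$ let $Z_m=\{(g_1,\dots,g_m)\in G^m: g_1+\cdots+g_{m-1}=g_m\}$ and $\widetilde{L}(g_1,\dots,g_m)=(L(g_1),\dots,L(g_m))$; $L$ is $m$-friendly if for every $l\in\widetilde{L}(Z_m)$ and every $i$, the set of $i$-th coordinates of elements of $\widetilde{L}^{-1}(l)$ equals $L^{-1}(l_i)$; $L$ is friendly if it is $m$-friendly for all $m\ge3$. *)

(* Defs.v *)
From HB Require Import structures.
From mathcomp Require Import all_boot all_order all_algebra.
Set Implicit Arguments. Unset Strict Implicit. Unset Printing Implicit Defensive.
Import GRing.Theory.
Local Open Scope ring_scope.

(* We index m = n.+1, so tuples are {ffun 'I_n.+1 -> _} and the last   *)
(* coordinate g_m is g ord_max.                                        *)

Definition Zset (G : finZmodType) (n : nat) : {set {ffun 'I_n.+1 -> G}} :=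
  [set g : {ffun 'I_n.+1 -> G} |
     \sum_(j < n.+1 | j != ord_max) g j == g ord_max].

Definition Ltilde (G : finZmodType) (Lab : finType) (L : G -> Lab) (n : nat)
  (g : {ffun 'I_n.+1 -> G}) : {ffun 'I_n.+1 -> Lab} := [ffun j => L (g j)].

Definition friendly_at (G : finZmodType) (Lab : finType) (L : G -> Lab) (n : nat) : Prop :=
  forall l : {ffun 'I_n.+1 -> Lab},
    l \in [set Ltilde L (g : {ffun 'I_n.+1 -> G}) | g in Zset G n] ->
    forall i : 'I_n.+1,
      [set (g : {ffun 'I_n.+1 -> G}) i | g in [set g in Zset G n | Ltilde L g == l]] = [set x | L x == l i].

(* friendly = m-friendly for every m >= 3, i.e. n.+1 >= 3 *)
Definition friendly (G : finZmodType) (Lab : finType) (L : G -> Lab) : Prop :=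
  forall n : nat, (2 <= n)%N -> friendly_at L n.

(* Trees with root edge, encoded by a parent function on a finite      *)
(* vertex type V: vertex v <> rho is joined to its parent par v, and   *)
(* the edge {v, par v} is identified with the vertex v (its endpoint   *)
(* farther from rho).                                                  *)

Definition is_tree_with_root_edge (V : finType) (rho : V) (par : V -> V) : Prop :=
  [/\ par rho = rho,
      (forall v : V, fconnect par v rho) &
      #|[set v | (v != rho) && (par v == rho)]| = 1%N ].  (* rho is a leaf *)

(* A (sub)tree with root edge described inside V by its vertex set S,  *)
(* its distinguished leaf r, and the (restricted) parent function par. *)
Section SubTree.
Variables (V : finType) (par : V -> V) (S : {set V}) (r : V).

Definition tedges : {set V} := [set v in S | v != r].

Definition tchildren (v : V) : {set V} := [set c in tedges | par c == v].

Definition tinterior (v : V) : bool :=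
  [&& v \in S, v != r & tchildren v != set0].

(* consistent assignment (values outside tedges are irrelevant) *)
Definition consistent (G : zmodType) (h : V -> G) : Prop :=
  forall v, tinterior v -> h v = \sum_(c in tchildren v) h c.

Definition in_im (G : zmodType) (Lab : Type) (L : G -> Lab) (lam : V -> Lab) : Prop :=
  exists h : V -> G, consistent h /\ forall v, v \in tedges -> lam v = L (h v).
End SubTree.

(* edge v is below edge u : u lies on the path from rho to v *)
Definition below (V : finType) (par : V -> V) (u v : V) : bool := fconnect par v u.

(* T_{e,-} for e = u: the edges below u, together with the endpoint par u *)
Definition Tminus_vertices (V : finType) (par : V -> V) (u : V) : {set V} :=
  [set v | below par u v] :|: [set par u].

(* T_{e,+} for e = u: e and all edges not below e, with their endpoints *)
Definition Tplus_vertices (V : finType) (par : V -> V) (u : V) : {set V} :=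
  [set v | ~~ below par u v] :|: [set u].

(* Main.v *)
Require Import Defs.
From mathcomp Require Import all_boot all_order all_algebra.
Set Implicit Arguments. Unset Strict Implicit. Unset Printing Implicit Defensive.
Import GRing.Theory.
Local Open Scope ring_scope.

Lemma belowP (V : finType) (par : V -> V) u v :
  reflect (exists n, iter n par v = u) (below par u v).
Proof.
apply: (iffP idP) => [H|[n <-]]; last exact: fconnect_iter.
by exists (findex par v u); apply: iter_findex.
Qed.

Lemma iter_fixp (V : Type) (f : V -> V) x n : f x = x -> iter n f x = x.
Proof. by move=> fx; elim: n => //= n ->. Qed.

Lemma no_cycle (V : finType) (rho : V) (par : V -> V) u c :
  is_tree_with_root_edge rho par ->
  below par c u -> par c = u -> c != rho -> False.
Proof.
case=> prho reach _ /belowP [k Hk] pc /eqP; apply.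
have cyc : iter k.+1 par c = c by rewrite iterSr pc.
have cycm : forall m, iter (m * k.+1) par c = c.
  by elim=> // m IH; rewrite mulSn iterD IH cyc.
have /belowP [n Hn] := reach c.
by rewrite -{1}(cycm n) mulnSr iterD Hn iter_fixp.
Qed.

Lemma below_trans (V : finType) (par : V -> V) a b c :
  below par a b -> below par b c -> below par a c.
Proof. by move=> H1 H2; apply: connect_trans H2 H1. Qed.

Lemma below_par (V : finType) (par : V -> V) u c :
  below par u (par c) -> below par u c.
Proof. by move=> H; apply: connect_trans H; apply: fconnect1. Qed.

Lemma below_refl (V : finType) (par : V -> V) u : below par u u.
Proof. exact: connect0. Qed.

Lemma below_step (V : finType) (par : V -> V) u v :
  below par u v -> v != u -> below par u (par v).
Proof.
move=> /belowP [[|n] Hn] nvu; first by rewrite -Hn eqxx in nvu.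
by apply/belowP; exists n; rewrite -iterSr.
Qed.

Lemma below_child (V : finType) (rho : V) (par : V -> V) u v :
  par rho = rho -> u != rho -> below par u v -> v != u ->
  exists c, [/\ par c = u, c != rho & below par c v].
Proof.
move=> prho urho /belowP [[|n] Hn] nvu; first by rewrite -Hn eqxx in nvu.
exists (iter n par v); split; first by rewrite -iterS.
  by apply: contra urho => /eqP E; rewrite -Hn iterS E prho.
exact: fconnect_iter.
Qed.

Lemma below_ne_rho (V : finType) (rho : V) (par : V -> V) u v :
  par rho = rho -> u != rho -> below par u v -> v != rho.
Proof.
move=> prho urho /belowP [n Hn]; apply: contra urho => /eqP E.
by rewrite -Hn E iter_fixp.
Qed.

Lemma below_disj (V : finType) (rho : V) (par : V -> V) u c1 c2 v :
  is_tree_with_root_edge rho par ->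
  par c1 = u -> par c2 = u -> c1 != rho -> c2 != rho -> c1 != c2 ->
  below par c1 v -> below par c2 v -> False.
Proof.
move=> T p1 p2 r1 r2 n12 /belowP [k Hk] /belowP [j Hj].
wlog kj : c1 c2 k j p1 p2 r1 r2 n12 Hk Hj / (k <= j)%N.
  move=> W; case: (leqP k j) => [|/ltnW] H; first exact: (W c1 c2 k j).
  by apply: (W c2 c1 j k) => //; rewrite eq_sym.
move: Hj; rewrite -(subnK kj) iterD Hk.
case E: (j - k)%N => [|m]; first by move=> /eqP; rewrite (negbTE n12).
rewrite iterSr p1 => H.
apply: (no_cycle T (u:=u) (c:=c2)) => //.
by apply/belowP; exists m.
Qed.

Definition consb (V : finType) (rho : V) (par : V -> V) (G : zmodType) u (h : V -> G) :=
  forall v, below par u v -> tinterior par [set: V] rho v ->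
    h v = \sum_(c in tchildren par [set: V] rho v) h c.

Lemma in_ch (V : finType) (rho : V) (par : V -> V) v c :
  (c \in tchildren par [set: V] rho v) = (c != rho) && (par c == v).
Proof. by rewrite !inE. Qed.

Lemma consb_loc (V : finType) (rho : V) (par : V -> V) (G : zmodType) u (h h1 : V -> G) :
  (forall v, below par u v -> h1 v = h v) -> consb rho par u h -> consb rho par u h1.
Proof.
move=> E Hc v bv iv; rewrite E // (Hc v bv iv); apply: eq_bigr => c.
rewrite in_ch => /andP[_ /eqP pc]; symmetry; apply: E; apply: below_par; by rewrite pc.
Qed.

Definition adjP (V : finType) (rho : V) (par : V -> V) (G : zmodType) (Lab : Type) (L : G -> Lab) c :=
  forall h : V -> G, consb rho par c h -> forall g, L g = L (h c) ->
  exists h', [/\ consb rho par c h', (forall v, below par c v -> L (h' v) = L (h v)),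
     h' c = g & (forall v, ~~ below par c v -> h' v = h v)].

Lemma multi (V : finType) (rho : V) (par : V -> V) (G : zmodType) (Lab : Type) (L : G -> Lab)
  (gc : V -> G) (s : seq V) :
  uniq s -> (forall c, c \in s -> adjP rho par L c) ->
  (forall c1 c2 v, c1 \in s -> c2 \in s -> c1 != c2 -> below par c1 v -> below par c2 v -> False) ->
  forall h, (forall c, c \in s -> consb rho par c h) -> (forall c, c \in s -> L (gc c) = L (h c)) ->
  exists h', [/\ (forall c, c \in s -> consb rho par c h'),
     (forall c v, c \in s -> below par c v -> L (h' v) = L (h v)),
     (forall c, c \in s -> h' c = gc c) &
     (forall v, (forall c, c \in s -> ~~ below par c v) -> h' v = h v)].
Proof.
elim: s => [|c s IH] /=.
  by move=> _ _ _ h _ _; exists h; split.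
move=> /andP[cns us] Ad Dis h Hc HL.
have [h1 [c1 l1 e1 o1]] := Ad c (mem_head _ _) h (Hc c (mem_head _ _)) (gc c) (HL c (mem_head _ _)).
have nb : forall c' v, c' \in s -> below par c' v -> ~~ below par c v.
  move=> c' v c's b1; apply/negP => b2; apply: (Dis c' c v) => //.
  - by rewrite inE c's orbT.
  - by rewrite mem_head.
  - by apply: contra cns => /eqP <-.
have A1 : forall c', c' \in s -> adjP rho par L c'.
  by move=> c' H; apply: Ad; rewrite inE H orbT.
have A2 : forall c1' c2' v, c1' \in s -> c2' \in s -> c1' != c2' -> below par c1' v -> below par c2' v -> False.
  by move=> c1' c2' v H1 H2; apply: Dis; rewrite inE ?H1 ?H2 orbT.
have A3 : forall c', c' \in s -> consb rho par c' h1.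
  move=> c' c's; apply: (consb_loc (h := h)); last by apply: Hc; rewrite inE c's orbT.
  move=> v bv; apply: o1; exact: nb bv.
have A4 : forall c', c' \in s -> L (gc c') = L (h1 c').
  move=> c' c's; rewrite o1; last exact: nb (below_refl _ _).
  by apply: HL; rewrite inE c's orbT.
have [h2 [c2 l2 e2 o2]] := IH us A1 A2 h1 A3 A4.
have o2c : forall v, below par c v -> h2 v = h1 v.
  move=> v bv; apply: o2 => c' c's; apply/negP => b'.
  by move: (nb c' v c's b'); rewrite bv.
exists h2; split.
- move=> c'; rewrite inE => /orP[/eqP->|c's]; last exact: c2.
  exact: consb_loc o2c c1.
- move=> c' v; rewrite inE => /orP[/eqP->|c's] bv.
    by rewrite o2c // l1.
  by rewrite (l2 c') // o1 //; exact: nb bv.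
- move=> c'; rewrite inE => /orP[/eqP->|c's]; last exact: e2.
  by rewrite o2c ?below_refl.
- move=> v nbv; rewrite o2; first by apply: o1; apply: nbv; rewrite mem_head.
  by move=> c' c's; apply: nbv; rewrite inE c's orbT.
Qed.

Lemma sum_lift_max (G : zmodType) k (F : 'I_k.+1 -> G) :
  \sum_(j < k.+1 | j != ord_max) F j = \sum_(i < k) F (lift ord_max i).
Proof.
apply: (@addrI _ (F ord_max)).
rewrite -(bigD1_ord ord_max (P := xpredT)) //.
by rewrite [RHS](bigD1 ord_max).
Qed.

Lemma gc_exists (G : finZmodType) (Lab : finType) (L : G -> Lab) (V : finType)
  (C : {set V}) (h : V -> G) (y g : G) :
  friendly L -> C != set0 -> y = \sum_(c in C) h c -> L g = L y ->
  exists gc : V -> G, (forall c, c \in C -> L (gc c) = L (h c)) /\ \sum_(c in C) gc c = g.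
Proof.
move=> fr Cn0 Ey Lg.
have [c0 Cc0] : exists c0, c0 \in C by apply/set0Pn.
case: (ltnP 1 #|C|) => [C2|C1].
  pose k := #|C|.
  pose g0 : {ffun 'I_k.+1 -> G} :=
    [ffun j => if unlift ord_max j is Some j' then h (enum_val j') else y].
  have g0l : forall i, g0 (lift ord_max i) = h (enum_val i).
    by move=> i; rewrite ffunE liftK.
  have g0m : g0 ord_max = y by rewrite ffunE unlift_none.
  have g0Z : g0 \in Zset G k.
    rewrite inE sum_lift_max g0m Ey [in X in _ == X]big_enum_val.
    by apply/eqP; apply: eq_bigr => i _; rewrite g0l.
  have := fr k C2 (Ltilde L g0) (imset_f _ g0Z) ord_max.
  move=> /setP /(_ g); rewrite inE ffunE g0m Lg eqxx => /imsetP [g1].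
  rewrite inE => /andP[g1Z /eqP g1L] gE.
  exists (fun c => g1 (lift ord_max (enum_rank_in Cc0 c))); split.
    move=> c cC.
    have := congr1 (fun f : {ffun 'I_k.+1 -> Lab} => f (lift ord_max (enum_rank_in Cc0 c))) g1L.
    by rewrite !ffunE liftK enum_rankK_in.
  rewrite [in LHS]big_enum_val /=.
  under eq_bigr do rewrite enum_valK_in.
  by rewrite -sum_lift_max gE; move: g1Z; rewrite inE => /eqP.
have /cards1P [c1 C1e] : #|C| == 1%N.
  by rewrite eqn_leq C1 card_gt0.
exists (fun _ => g); split; last by rewrite C1e big_set1.
by move=> c; rewrite C1e inE => /eqP ->; rewrite Lg Ey C1e big_set1.
Qed.

Lemma child_ne (V : finType) (rho : V) (par : V -> V) u v c :
  is_tree_with_root_edge rho par -> below par u v -> par c = v -> c != rho -> c != u.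
Proof.
move=> T buv pc cr; apply/negP => /eqP E; subst c.
exact: (no_cycle T buv pc cr).
Qed.

Lemma adjust (G : finZmodType) (Lab : finType) (L : G -> Lab) (V : finType) (rho : V) (par : V -> V) :
  friendly L -> is_tree_with_root_edge rho par -> forall u, u != rho -> adjP rho par L u.
Proof.
move=> fr T.
have prho : par rho = rho by case: T.
suff H : forall n u, (#|[set v | below par u v]| <= n)%N -> u != rho -> adjP rho par L u.
  by move=> u; apply: H (leqnn _).
elim=> [|n IH] u.
  by rewrite leqn0 => /eqP/cards0_eq/setP/(_ u); rewrite !inE below_refl.
move=> cu ur.
pose C := tchildren par [set: V] rho u.
have Cc : forall c, c \in C -> (c != rho) /\ (par c = u).
  by move=> c; rewrite in_ch => /andP[-> /eqP].
have adjC : forall c, c \in C -> adjP rho par L c.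
  move=> c /Cc [cr pc]; apply: IH => //.
  rewrite -ltnS; apply: leq_trans cu; apply: proper_card.
  apply/properP; split.
    apply/subsetP => v; rewrite !inE => bcv.
    by apply: below_trans bcv; apply: below_par; rewrite pc below_refl.
  exists u; rewrite !inE ?below_refl //.
  by apply/negP => bcu; apply: (no_cycle T bcu pc cr).
move=> h hc g Lg.
have ne_u : forall v c, below par u v -> par c = v -> c != rho -> c != u.
  by move=> v c; apply: child_ne.
case: (boolP (C == set0)) => [/eqP C0|Cn0].
  exists (fun v => if v == u then g else h v); split.
  - move=> v buv iv; case: eqP => [E|/eqP vu].
      by subst v; move: iv; rewrite /tinterior -/C C0 eqxx !andbF.
    rewrite (hc v buv iv); apply: eq_bigr => c; rewrite in_ch => /andP[cr /eqP pc].
    by rewrite (negbTE (ne_u v c buv pc cr)).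
  - by move=> v _; case: eqP => [->|].
  - by rewrite eqxx.
  - by move=> v nb; case: eqP => // E; subst v; rewrite below_refl in nb.
have iu : tinterior par [set: V] rho u by rewrite /tinterior inE ur.
have [gc [gcL gcS]] := gc_exists fr Cn0 (hc u (below_refl _ _) iu) Lg.
have hcC : forall c, c \in enum C -> consb rho par c h.
  move=> c; rewrite mem_enum => /Cc [cr pc] v bcv; apply: hc.
  by apply: below_trans bcv; apply: below_par; rewrite pc below_refl.
have A1 : forall c, c \in enum C -> adjP rho par L c.
  by move=> c; rewrite mem_enum; apply: adjC.
have A2 : forall c1 c2 v, c1 \in enum C -> c2 \in enum C -> c1 != c2 ->
    below par c1 v -> below par c2 v -> False.
  move=> c1 c2' v; rewrite !mem_enum => /Cc [r1 p1] /Cc [r2 p2] n12.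
  exact: below_disj T p1 p2 r1 r2 n12.
have A4 : forall c, c \in enum C -> L (gc c) = L (h c).
  by move=> c; rewrite mem_enum; apply: gcL.
have [h2 [c2 l2 e2 o2]] := @multi V rho par G Lab L gc (enum C) (enum_uniq C) A1 A2 h hcC A4.
exists (fun v => if v == u then g else h2 v); split.
- move=> v buv iv; case: eqP => [E|/eqP vu].
    subst v; rewrite -gcS; apply: eq_bigr => c cC.
    have [cr pc] := Cc c cC.
    by rewrite (negbTE (ne_u u c (below_refl _ _) pc cr)) e2 // mem_enum.
  have [c [pc cr bcv]] := below_child prho ur buv vu.
  have cC : c \in enum C by rewrite mem_enum in_ch cr pc eqxx.
  rewrite (c2 c cC v bcv iv); apply: eq_bigr => c'; rewrite in_ch => /andP[cr' /eqP pc'].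
  by rewrite (negbTE (ne_u v c' buv pc' cr')).
- move=> v buv; case: eqP => [->|/eqP vu] //.
  have [c [pc cr bcv]] := below_child prho ur buv vu.
  by apply: (l2 c) => //; rewrite mem_enum in_ch cr pc eqxx.
- by rewrite eqxx.
- move=> v nb; case: eqP => [E|_]; first by subst v; rewrite below_refl in nb.
  apply: o2 => c; rewrite mem_enum => /Cc [cr pc]; apply: contra nb => bcv.
  by apply: below_trans bcv; apply: below_par; rewrite pc below_refl.
Qed.

Theorem lemma3p6 (G : finZmodType) (Lab : finType) (L : G -> Lab)
  (V : finType) (rho : V) (par : V -> V) (e : V)
  (lm lp lam : V -> Lab) :
  friendly L ->
  is_tree_with_root_edge rho par ->
  (* e is an edge whose two endpoints e and par e are interior vertices *)
  e != rho ->
  tinterior par [set: V] rho e ->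
  tinterior par [set: V] rho (par e) ->
  in_im par (Tminus_vertices par e) (par e) L lm ->
  in_im par (Tplus_vertices par e) rho L lp ->
  lm e = lp e ->
  (forall v, v \in tedges (Tminus_vertices par e) (par e) -> lam v = lm v) ->
  (forall v, v \in tedges (Tplus_vertices par e) rho -> lam v = lp v) ->
  in_im par [set: V] rho L lam.
Proof.
move=> fr T er _ _ [hm [hmc hml]] [hp [hpc hpl]] lme Em Ep.
have prho : par rho = rho by case: T.
set Sm := Tminus_vertices par e.
set Sp := Tplus_vertices par e.
have pe_nb : forall v, below par e v -> v != par e.
  move=> v bv; apply/negP => /eqP E; subst v.
  exact: (no_cycle T bv (erefl _) er).
have tm_edge : forall v, below par e v -> v \in tedges Sm (par e).
  by move=> v bv; rewrite !inE bv pe_nb.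
have tm_ch : forall v, below par e v ->
    tchildren par Sm (par e) v = tchildren par [set: V] rho v.
  move=> v bv; apply/setP => c; rewrite in_ch !inE.
  case: (boolP (par c == v)) => [/eqP pc|]; rewrite ?andbF ?andbT //.
  have bc : below par e c by apply: below_par; rewrite pc.
  by rewrite bc pe_nb // (below_ne_rho prho er bc).
have step_e : forall c, below par e c -> ~~ below par e (par c) -> c = e.
  move=> c bc nb; apply/eqP; apply: contraNT nb => ce; exact: below_step.
have tp_ch : forall v, ~~ below par e v ->
    tchildren par Sp rho v = tchildren par [set: V] rho v.
  move=> v nbv; apply/setP => c; rewrite in_ch !inE.
  case: (boolP (par c == v)) => [/eqP pc|]; rewrite ?andbF ?andbT //.
  case: (boolP (below par e c)) => bc //=.
  by rewrite (step_e c bc) ?pc // eqxx.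
have hmb : consb rho par e hm.
  move=> v bv iv; rewrite -tm_ch //; apply: hmc.
  move: iv; rewrite /tinterior tm_ch // !inE bv pe_nb //=.
  by case/andP.
have Le : L (hp e) = L (hm e).
  rewrite -hml; last exact: tm_edge (below_refl _ _).
  by rewrite -hpl ?lme // !inE eqxx orbT er.
have [h' [c' l' e' _]] := adjust fr T er hmb Le.
exists (fun v => if below par e v then h' v else hp v); split.
- move=> v iv; case: ifP => bv.
    rewrite (c' v bv iv); apply: eq_bigr => c; rewrite in_ch => /andP[_ /eqP pc].
    by rewrite ifT //; apply: below_par; rewrite pc.
  have nbv : ~~ below par e v by rewrite bv.
  rewrite hpc; last by move: iv; rewrite /tinterior tp_ch // !inE nbv.
  rewrite tp_ch //; apply: eq_bigr => c; rewrite in_ch => /andP[_ /eqP pc].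
  case: ifP => // bc; rewrite (step_e c bc) ?e' //; by rewrite pc.
- move=> v; rewrite !inE => vr; case: ifP => bv.
    by rewrite Em ?tm_edge // hml ?tm_edge // l'.
  by rewrite Ep ?hpl // !inE bv vr.
Qed.
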